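(* Let $n\in\mathbb N$, $a_k=k/(n+1)$ for $0\le k\le n+1$, and $g_n(x)=\sum_{k=0}^n\binom nk(-1)^k\chi_{(a_k,a_{k+1})}(x)$. Define $G_n(x)=\int_0^x\cdots\int_0^{x_{i+1}}\cdots\int_0^{x_2}g_n(x_1)\,dx_1\ldots dx_i\ldots dx_n$ (the $n$-fold iterated integral of $g_n$ from $0$). Then $G_n\in C^{n-1}([0,1])$, $G_n(x)=O(x^n)$ as $x\to0^+$, $G_n(x)=O((x-1)^n)$ as $x\to1^-$, and $G_n>0$ on $(0,1)$.
   Context: $\chi_{(a,b)}$ denotes the indicator function of the interval $(a,b)$. *)

(* Defs.v *)
From Stdlib Require Import Reals.
From Coquelicot Require Import Coquelicot.
Open Scope R_scope.

Definition chi (a b x : R) : R :=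
  if Rlt_dec a x then (if Rlt_dec x b then 1 else 0) else 0.

Definition a_pt (n k : nat) : R := INR k / INR (S n).

Definition g_fun (n : nat) (x : R) : R :=
  sum_f_R0 (fun k => Binomial.C n k * (-1) ^ k * chi (a_pt n k) (a_pt n (S k)) x) n.

Fixpoint iter_int (i : nat) (f : R -> R) : R -> R :=
  match i with
  | O => f
  | S j => fun x => RInt (iter_int j f) 0 x
  end.

Definition G_fun (n : nat) : R -> R := iter_int n (g_fun n).

(* f is C^m on [0,1]: the derivatives f, f', ..., f^(m) exist at every point of
   [0,1] (f being defined on all of R), and f^(m) is continuous on [0,1]
   (continuity relative to [0,1]). *)
Definition C_on_01 (m : nat) (f : R -> R) : Prop :=
  (forall k x, (k < m)%nat -> 0 <= x <= 1 -> ex_derive (Derive_n f k) x) /\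
  (forall x, 0 <= x <= 1 ->
     filterlim (Derive_n f m) (within (fun y => 0 <= y <= 1) (locally x))
               (locally (Derive_n f m x))).

(* Main.v *)
Require Import Defs.
From Stdlib Require Import Reals.
From Coquelicot Require Import Coquelicot.
From Stdlib Require Import Lra Lia Factorial.
Open Scope R_scope.


Definition Pp (j : nat) (y : R) : R := ((y + Rabs y) / 2) ^ j / INR (fact j).

Lemma INR_fact_pos j : 0 < INR (fact j).
Proof. apply lt_0_INR. apply lt_O_fact. Qed.

Lemma Pp_nonpos j y : y <= 0 -> Pp (S j) y = 0.
Proof.
  intro H. unfold Pp. rewrite Rabs_left1 by lra.
  replace ((y + - y) / 2) with 0 by field. rewrite pow_i by lia. unfold Rdiv. ring.
Qed.

Lemma Pp_pos j y : 0 <= y -> Pp j y = y ^ j / INR (fact j).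
Proof.
  intro H. unfold Pp. rewrite Rabs_pos_eq by lra.
  replace ((y + y) / 2) with y by field. reflexivity.
Qed.

Lemma Pp_ge0 j y : 0 <= Pp j y.
Proof.
  unfold Pp. apply Rmult_le_pos.
  - apply pow_le. pose proof (Rle_abs (-y)). rewrite Rabs_Ropp in H. lra.
  - left. apply Rinv_0_lt_compat, INR_fact_pos.
Qed.

Lemma cont_pow (u : R -> R) x j : continuous u x -> continuous (fun y => u y ^ j) x.
Proof.
  intro Hu. induction j.
  - simpl. apply continuous_const.
  - simpl. apply (continuous_mult u (fun y => u y ^ j)); auto.
Qed.

Lemma Pp_cont j x : continuous (Pp j) x.
Proof.
  unfold Pp.
  apply (continuous_mult (fun y => ((y + Rabs y) / 2) ^ j) (fun _ => / INR (fact j))).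
  - apply cont_pow.
    apply (continuous_mult (fun y => y + Rabs y) (fun _ => /2)).
    + apply (continuous_plus (fun y => y) Rabs). apply continuous_id. apply continuous_Rabs.
    + apply continuous_const.
  - apply continuous_const.
Qed.

Lemma is_RInt_eq (f : R -> R) (a b l l' : R) : is_RInt f a b l -> l = l' -> is_RInt f a b l'.
Proof. intros H ->. exact H. Qed.

Lemma is_RInt_cst (c a b : R) : is_RInt (fun _ => c) a b ((b - a) * c).
Proof. apply (is_RInt_const a b c). Qed.

Lemma Pp_int k y : is_RInt (Pp (S k)) 0 y (Pp (S (S k)) y).
Proof.
  destruct (Rle_lt_dec 0 y) as [Hy|Hy].
  - apply (is_RInt_ext (fun t => t ^ (S k) / INR (fact (S k)))).
    { intros t Ht. rewrite Rmin_left in Ht by lra. rewrite Pp_pos by lra. reflexivity. }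
    apply is_RInt_eq with (minus ((fun t => t ^ (S (S k)) / INR (fact (S (S k)))) y)
                                 ((fun t => t ^ (S (S k)) / INR (fact (S (S k)))) 0)).
    + refine (is_RInt_derive (V := R_CompleteNormedModule) (fun t => t ^ (S (S k)) / INR (fact (S (S k)))) _ _ _ _ _).
      * intros t _.
        apply is_derive_ext with (fun u => / INR (fact (S (S k))) * u ^ (S (S k))).
        { intro u. simpl. unfold Rdiv. ring. }
        replace (t ^ S k / INR (fact (S k))) with (/ INR (fact (S (S k))) * (INR (S (S k)) * 1 * t ^ Init.Nat.pred (S (S k)))).
        2:{ simpl pred. rewrite (fact_simpl (S k)). rewrite mult_INR. field. split.
            apply Rgt_not_eq, INR_fact_pos. apply not_0_INR. lia. }
        apply is_derive_scal. apply is_derive_pow. apply (is_derive_id t).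
      * intros t _. apply (continuous_mult (fun u => u ^ S k) (fun _ => / INR (fact (S k)))).
        apply cont_pow, continuous_id. apply continuous_const.
    + rewrite Pp_pos by lra. change (minus ?a ?b) with (a - b). rewrite pow_i by lia.
      unfold Rdiv; rewrite Rmult_0_l, Rminus_0_r; reflexivity.
  - apply (is_RInt_ext (fun _ => 0)).
    { intros t Ht. rewrite Rmax_left in Ht by lra. rewrite Pp_nonpos by lra. reflexivity. }
    apply is_RInt_eq with ((y - 0) * 0). apply is_RInt_cst.
    rewrite Pp_nonpos by lra. ring.
Qed.

Lemma Pp_deriv k y : is_derive (Pp (S (S k))) y (Pp (S k) y).
Proof.
  apply (is_derive_RInt (Pp (S k)) (Pp (S (S k))) 0).
  - apply filter_forall. intro b. apply Pp_int.
  - apply Pp_cont.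
Qed.

Fixpoint Dr (h : R) (m : nat) (f : R -> R) (x : R) : R :=
  match m with
  | O => f x
  | S m' => Dr h m' f x - Dr h m' f (x - h)
  end.

Lemma Dr_ext h m f g x : (forall y, f y = g y) -> Dr h m f x = Dr h m g x.
Proof.
  intro E. revert x. induction m; intro x; simpl; [apply E|]. rewrite !IHm. reflexivity.
Qed.

Lemma Dr_comb h m f g a b x :
  Dr h m (fun y => a * f y + b * g y) x = a * Dr h m f x + b * Dr h m g x.
Proof. revert x. induction m; intro x; simpl; [reflexivity|]. rewrite !IHm. ring. Qed.

Lemma Dr_derive h m f df x :
  (forall y, is_derive f y (df y)) -> is_derive (Dr h m f) x (Dr h m df x).
Proof.
  intro Hd. revert x. induction m; intro x; simpl; [apply Hd|].
  apply (is_derive_minus (Dr h m f) (fun y => Dr h m f (y - h))). apply IHm.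
  assert (Hs : is_derive (fun y:R => y - h) x 1). { auto_derive. auto. ring. }
  pose proof (is_derive_comp (Dr h m f) (fun y => y - h) x _ _ (IHm (x-h)) Hs) as Hc.
  change (scal 1 ?v) with (1 * v) in Hc. rewrite Rmult_1_l in Hc. exact Hc.
Qed.

Lemma Dr_cont h m f x : (forall y, continuous f y) -> continuous (Dr h m f) x.
Proof.
  intro Hc. revert x. induction m; intro x; simpl; [apply Hc|].
  apply (continuous_minus (Dr h m f) (fun y => Dr h m f (y - h))). apply IHm.
  apply (continuous_comp (fun y => y - h) (Dr h m f)). 2: apply IHm.
  apply (continuous_minus (fun y : R => y) (fun _ => h)). apply continuous_id. apply continuous_const.
Qed.

Lemma Dr_small h m f x : 0 < h -> (forall y, y <= 0 -> f y = 0) -> x <= h -> Dr h m f x = f x.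
Proof.
  intros hp Hf. revert x. induction m; intros x Hx; simpl; [reflexivity|].
  rewrite !IHm by lra. rewrite (Hf (x - h)) by lra. ring.
Qed.

Lemma Dr_large h m f x : 0 < h -> (forall y, 0 <= y -> f y = 0) ->
  INR m * h - h < x -> Dr h m f x = (-1) ^ m * f (x - INR m * h).
Proof.
  intros hp Hf. revert x. induction m; intros x Hx; simpl Dr.
  - simpl. rewrite Rmult_0_l, Rminus_0_r. ring.
  - rewrite S_INR in Hx. rewrite !IHm by lra.
    rewrite (Hf (x - INR m * h)) by lra. rewrite S_INR.
    replace (x - h - INR m * h) with (x - (INR m + 1) * h) by ring. simpl. ring.
Qed.

Lemma Dr_poly h m : forall j, (j < m)%nat -> forall x, Dr h m (fun y => y ^ j) x = 0.
Proof.
  induction m; intros j Hj x; [lia|].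
  simpl Dr.
  destruct (Nat.eq_dec j m) as [->|Hne].
  2:{ rewrite !IHm by lia. ring. }
  destruct m.
  - simpl. ring.
  - assert (Hd : forall y, is_derive (Dr h (S m) (fun y => y ^ S m)) y 0).
    { intro y.
      replace 0 with (Dr h (S m) (fun t => INR (S m) * t ^ m + 0 * t ^ m) y).
      2:{ rewrite Dr_comb, IHm by lia. ring. }
      apply Dr_derive. intro t.
      apply is_derive_ext with (fun t => t ^ S m). { intro; reflexivity. }
      replace (INR (S m) * t ^ m + 0 * t ^ m) with (INR (S m) * 1 * t ^ Init.Nat.pred (S m)) by (simpl; ring).
      apply is_derive_pow. apply (is_derive_id t). }
    destruct (MVT_gen (Dr h (S m) (fun y => y ^ S m)) (x - h) x (fun _ => 0)) as [c [_ Hc]].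
    + intros; apply Hd.
    + intros y _. apply continuity_pt_filterlim. apply (ex_derive_continuous (Dr h (S m) (fun y => y ^ S m))).
      eexists; apply Hd.
    + lra.
Qed.

Definition Bz (m k : nat) : R := if Nat.leb k m then Binomial.C m k else 0.

Lemma Bz_0 m : Bz m 0 = 1.
Proof. unfold Bz. simpl. apply C_n_0. Qed.

Lemma Bz_above m k : (m < k)%nat -> Bz m k = 0.
Proof. intro H. unfold Bz. replace (Nat.leb k m) with false. reflexivity.
  symmetry. apply Nat.leb_gt. exact H. Qed.

Lemma Bz_le m k : (k <= m)%nat -> Bz m k = Binomial.C m k.
Proof. intro H. unfold Bz. replace (Nat.leb k m) with true. reflexivity.
  symmetry. apply Nat.leb_le. exact H. Qed.

Lemma Bz_pascal m k : Bz (S m) (S k) = Bz m k + Bz m (S k).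
Proof.
  destruct (Nat.lt_trichotomy k m) as [H|[H|H]].
  - rewrite !Bz_le by lia. symmetry. apply pascal. exact H.
  - subst. rewrite (Bz_above m (S m)) by lia. rewrite !Bz_le by lia. rewrite !C_n_n. ring.
  - rewrite !Bz_above by lia. ring.
Qed.

Lemma Dr_binomB h m f x :
  Dr h m f x = sum_f_R0 (fun k => Bz m k * (-1) ^ k * f (x - INR k * h)) m.
Proof.
  revert x. induction m; intro x.
  - simpl. rewrite Bz_0. replace (x - 0 * h) with x by ring. ring.
  - simpl Dr. rewrite !IHm.
    set (S1 := sum_f_R0 (fun i => Bz m (S i) * (-1) ^ (S i) * f (x - INR (S i) * h)) m).
    assert (E2 : sum_f_R0 (fun k => Bz (S m) k * (-1) ^ k * f (x - INR k * h)) (S m) =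
       f x + S1 - sum_f_R0 (fun k => Bz m k * (-1) ^ k * f (x - h - INR k * h)) m).
    { rewrite (decomp_sum _ (S m)) by lia. simpl pred.
      rewrite (sum_eq (fun i => Bz (S m) (S i) * (-1) ^ (S i) * f (x - INR (S i) * h))
               (fun i => Bz m (S i) * (-1) ^ (S i) * f (x - INR (S i) * h)
                               - Bz m i * (-1) ^ i * f (x - h - INR i * h))).
      2:{ intros i _. rewrite Bz_pascal. rewrite S_INR.
          replace (x - h - INR i * h) with (x - (INR i + 1) * h) by ring. simpl. ring. }
      rewrite minus_sum. rewrite Bz_0. unfold S1.
      replace (x - INR 0 * h) with x by (simpl; ring). simpl pow. ring. }
    rewrite E2.
    assert (E : sum_f_R0 (fun k => Bz m k * (-1) ^ k * f (x - INR k * h)) m =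
            sum_f_R0 (fun k => Bz m k * (-1) ^ k * f (x - INR k * h)) (S m)).
    { rewrite tech5. rewrite (Bz_above m (S m)) by lia. ring. }
    rewrite E. rewrite (decomp_sum _ (S m)) by lia. simpl pred. rewrite Bz_0.
    replace (x - INR 0 * h) with x by (simpl; ring). unfold S1. simpl pow. ring.
Qed.

Lemma Dr_binom h m f x :
  Dr h m f x = sum_f_R0 (fun k => Binomial.C m k * (-1) ^ k * f (x - INR k * h)) m.
Proof.
  rewrite Dr_binomB. apply sum_eq. intros i Hi. rewrite Bz_le by lia. reflexivity.
Qed.

Lemma Pp1_eq y : Pp 1 y = (y + Rabs y) / 2.
Proof. unfold Pp. simpl. field. Qed.

Lemma Pp1_pos y : 0 <= y -> Pp 1 y = y.
Proof. intro H. rewrite Pp1_eq, Rabs_pos_eq by lra. field. Qed.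

Lemma Pp1_neg y : y <= 0 -> Pp 1 y = 0.
Proof. intro H. apply Pp_nonpos. exact H. Qed.

Lemma is_RInt_const_on (f : R -> R) u v c :
  (forall t, Rmin u v < t < Rmax u v -> f t = c) -> is_RInt f u v ((v - u) * c).
Proof.
  intro H. apply (is_RInt_ext (fun _ => c)). { intros t Ht. symmetry. apply H. exact Ht. }
  apply is_RInt_cst.
Qed.

Lemma Chasles_R (f : R -> R) (a b c l1 l2 : R) :
  is_RInt f a b l1 -> is_RInt f b c l2 -> is_RInt f a c (l1 + l2).
Proof. intros H1 H2. exact (is_RInt_Chasles f a b c l1 l2 H1 H2). Qed.

Lemma chi_int a b x : 0 <= a < b -> is_RInt (chi a b) 0 x (Pp 1 (x - a) - Pp 1 (x - b)).
Proof.
  intro Hab.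
  assert (Z1 : forall u v, u <= a -> v <= a -> is_RInt (chi a b) u v 0).
  { intros u v Hu Hv. apply is_RInt_eq with ((v - u) * 0). 2: ring.
    apply is_RInt_const_on. intros t Ht. unfold chi.
    destruct (Rlt_dec a t) as [H|H]; [|reflexivity].
    exfalso. assert (Rmax u v <= a) by (apply Rmax_lub; auto). lra. }
  assert (Z2 : forall u v, b <= u -> b <= v -> is_RInt (chi a b) u v 0).
  { intros u v Hu Hv. apply is_RInt_eq with ((v - u) * 0). 2: ring.
    apply is_RInt_const_on. intros t Ht. unfold chi.
    destruct (Rlt_dec a t) as [H|H]; [|reflexivity].
    destruct (Rlt_dec t b) as [H'|H']; [|reflexivity].
    exfalso. assert (b <= Rmin u v) by (apply Rmin_glb; auto). lra. }
  assert (O : forall u v, a <= u <= v -> v <= b -> is_RInt (chi a b) u v (v - u)).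
  { intros u v Hu Hv. apply is_RInt_eq with ((v - u) * 1). 2: ring.
    apply is_RInt_const_on. intros t Ht. rewrite Rmin_left in Ht by lra.
    rewrite Rmax_right in Ht by lra. unfold chi.
    destruct (Rlt_dec a t) as [H|H]; [|lra].
    destruct (Rlt_dec t b) as [H'|H']; [reflexivity|lra]. }
  destruct (Rle_lt_dec x a) as [H1|H1].
  - apply is_RInt_eq with 0. apply Z1; lra.
    rewrite !Pp1_neg by lra. ring.
  - destruct (Rle_lt_dec x b) as [H2|H2].
    + apply is_RInt_eq with (0 + (x - a)).
      apply Chasles_R with a. apply Z1; lra. apply O; lra.
      rewrite Pp1_pos by lra. rewrite Pp1_neg by lra. ring.
    + apply is_RInt_eq with ((0 + (b - a)) + 0).
      apply Chasles_R with b. apply Chasles_R with a. apply Z1; lra. apply O; lra.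
      apply Z2; lra.
      rewrite !Pp1_pos by lra. ring.
Qed.

Lemma is_RInt_sum (F : nat -> R -> R) (I : nat -> R) a b N :
  (forall k, is_RInt (F k) a b (I k)) ->
  is_RInt (fun t => sum_f_R0 (fun k => F k t) N) a b (sum_f_R0 I N).
Proof.
  intro H. induction N.
  - simpl. apply H.
  - simpl. apply (is_RInt_plus (fun t => sum_f_R0 (fun k => F k t) N) (F (S N))). exact IHN. apply H.
Qed.

Lemma INR_Sn_pos n : 0 < INR (S n).
Proof. apply lt_0_INR. lia. Qed.

Lemma g_int n x : is_RInt (g_fun n) 0 x (Dr (/ INR (S n)) (S n) (Pp 1) x).
Proof.
  set (h := / INR (S n)).
  assert (hp : 0 < h) by (apply Rinv_0_lt_compat, INR_Sn_pos).
  simpl Dr. rewrite !Dr_binom. rewrite <- minus_sum.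
  unfold g_fun. apply (is_RInt_sum (fun k t => Binomial.C n k * (-1) ^ k * chi (a_pt n k) (a_pt n (S k)) t)).
  intro k.
  assert (Ea : forall k, a_pt n k = INR k * h). { intro; unfold a_pt, h, Rdiv. reflexivity. }
  apply is_RInt_eq with (scal (Binomial.C n k * (-1) ^ k) (Pp 1 (x - a_pt n k) - Pp 1 (x - a_pt n (S k)))).
  - apply (is_RInt_scal (chi (a_pt n k) (a_pt n (S k)))). apply chi_int.
    rewrite !Ea, S_INR. split. apply Rmult_le_pos; [apply pos_INR|lra]. nra.
  - rewrite !Ea, S_INR. change (scal ?a ?b) with (a * b).
    replace (x - (INR k + 1) * h) with (x - h - INR k * h) by ring. ring.
Qed.

Lemma iter_E n j x : (1 <= j)%nat ->
  iter_int j (g_fun n) x = Dr (/ INR (S n)) (S n) (Pp j) x.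
Proof.
  set (h := / INR (S n)).
  assert (hp : 0 < h) by (apply Rinv_0_lt_compat, INR_Sn_pos).
  intro Hj. revert x. induction j; intro x; [lia|].
  destruct j.
  - simpl iter_int. apply is_RInt_unique. apply g_int.
  - simpl iter_int. simpl iter_int in IHj.
    rewrite (RInt_ext _ (Dr h (S n) (Pp (S j)))). 2:{ intros t _. apply IHj. lia. }
    apply is_RInt_unique.
    apply is_RInt_eq with (minus (Dr h (S n) (Pp (S (S j))) x) (Dr h (S n) (Pp (S (S j))) 0)).
    + refine (is_RInt_derive (V := R_CompleteNormedModule) (Dr h (S n) (Pp (S (S j)))) _ _ _ _ _).
      * intros t _. apply Dr_derive. intro y. apply Pp_deriv.
      * intros t _. apply Dr_cont. apply Pp_cont.
    + rewrite (Dr_small h (S n) _ 0) by (try apply Pp_nonpos; lra).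
      rewrite Pp_nonpos by lra. change (minus ?a ?b) with (a - b). ring.
Qed.

Lemma Dr_RInt h m k x : Dr h (S m) (Pp (S (S k))) x = RInt (Dr h m (Pp (S k))) (x - h) x.
Proof.
  symmetry. apply is_RInt_unique.
  apply is_RInt_eq with (minus (Dr h m (Pp (S (S k))) x) (Dr h m (Pp (S (S k))) (x - h))).
  + refine (is_RInt_derive (V := R_CompleteNormedModule) (Dr h m (Pp (S (S k)))) _ _ _ _ _).
    * intros t _. apply Dr_derive. intro y. apply Pp_deriv.
    * intros t _. apply Dr_cont. apply Pp_cont.
  + reflexivity.
Qed.

Lemma pos_chain h : 0 < h -> forall j x,
  0 <= Dr h (S (S j)) (Pp (S j)) x /\
  (0 < x < INR (S (S j)) * h -> 0 < Dr h (S (S j)) (Pp (S j)) x).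
Proof.
  intros hp j. induction j; intro x.
  - simpl Dr. rewrite !Pp1_eq. replace (INR 2) with 2 by (simpl; ring).
    unfold Rabs. destruct (Rcase_abs x), (Rcase_abs (x - h)), (Rcase_abs (x - h - h)); split; intros; lra.
  - rewrite Dr_RInt.
    set (q := Dr h (S (S j)) (Pp (S j))).
    assert (qc : forall t, continuous q t). { intro. apply Dr_cont. apply Pp_cont. }
    assert (qi : forall u v, ex_RInt q u v). { intros. apply (ex_RInt_continuous (V := R_CompleteNormedModule)). intros; apply qc. }
    split.
    + apply RInt_ge_0. lra. apply qi. intros t _. apply IHj.
    + intro Hx. rewrite S_INR in Hx.
      set (lo := Rmax (x - h) 0). set (hi := Rmin x (INR (S (S j)) * h)).
      assert (Hn : 0 < INR (S (S j)) * h) by (apply Rmult_lt_0_compat; [apply INR_Sn_pos|lra]).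
      assert (l1 : x - h <= lo) by apply Rmax_l.
      assert (l2 : 0 <= lo) by apply Rmax_r.
      assert (h1 : hi <= x) by apply Rmin_l.
      assert (h2 : hi <= INR (S (S j)) * h) by apply Rmin_r.
      assert (lh : lo < hi).
      { unfold lo, hi. apply Rmax_lub_lt; apply Rmin_glb_lt; lra. }
      rewrite <- (RInt_Chasles q (x - h) lo x) by apply qi.
      rewrite <- (RInt_Chasles q lo hi x) by apply qi.
      change (plus ?a (plus ?b ?c)) with (a + (b + c)).
      assert (0 <= RInt q (x - h) lo) by (apply RInt_ge_0; [lra|apply qi|intros; apply IHj]).
      assert (0 <= RInt q hi x) by (apply RInt_ge_0; [lra|apply qi|intros; apply IHj]).
      assert (0 < RInt q lo hi).
      { apply RInt_gt_0. lra. intros t Ht. apply IHj. lra. intros; apply qc. }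
      lra.
Qed.

Lemma chi_bound a b x : 0 <= chi a b x <= 1.
Proof. unfold chi. destruct (Rlt_dec a x); [destruct (Rlt_dec x b)|]; lra. Qed.

Lemma G0_eq x : G_fun 0 x = chi 0 1 x.
Proof.
  unfold G_fun. simpl iter_int. unfold g_fun. simpl sum_f_R0.
  replace (a_pt 0 0) with 0 by (unfold a_pt; simpl; field).
  replace (a_pt 0 1) with 1 by (unfold a_pt; simpl; field).
  rewrite C_n_0. ring.
Qed.

Lemma div_le a F : 0 <= a -> 1 <= F -> a / F <= a.
Proof.
  intros Ha HF. apply (Rmult_le_reg_r F). lra.
  unfold Rdiv. rewrite Rmult_assoc, Rinv_l by lra. nra.
Qed.

Lemma fact_ge1 n : 1 <= INR (fact n).
Proof. replace 1 with (INR 1) by reflexivity. apply le_INR. pose proof (lt_O_fact n). lia. Qed.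

Lemma m1sq n : (-1) ^ n * (-1) ^ n = 1.
Proof. rewrite <- Rpow_mult_distr. replace (-1 * -1) with 1 by ring. apply pow1. Qed.

Lemma Pp_refl n y : Pp (S n) y = / INR (fact (S n)) * y ^ (S n) + (- (-1) ^ (S n)) * Pp (S n) (- y).
Proof.
  destruct (Rle_lt_dec 0 y) as [H|H].
  - rewrite Pp_pos by lra. rewrite (Pp_nonpos n (-y)) by lra. unfold Rdiv. ring.
  - rewrite Pp_nonpos by lra. rewrite Pp_pos by lra.
    replace (- y) with (-1 * y) by ring. rewrite Rpow_mult_distr.
    pose proof (m1sq (S n)). unfold Rdiv.
    transitivity (/ INR (fact (S n)) * y ^ S n * (1 - (-1) ^ S n * (-1) ^ S n)).
    + rewrite H0. ring.
    + ring.
Qed.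

Theorem lemma6p4 (n : nat) :
  ((1 <= n)%nat -> C_on_01 (n - 1) (G_fun n)) /\
  (exists C delta, 0 < delta /\
     forall x, 0 < x < delta -> Rabs (G_fun n x) <= C * (Rabs x) ^ n) /\
  (exists C delta, 0 < delta /\
     forall x, 1 - delta < x < 1 -> Rabs (G_fun n x) <= C * (Rabs (x - 1)) ^ n) /\
  (forall x, 0 < x < 1 -> 0 < G_fun n x).
Proof.
  destruct (Nat.eq_dec n 0) as [->|Hn].
  { split; [intro; lia|]. split; [|split].
    - exists 1, 1. split; [lra|]. intros x _. rewrite G0_eq. simpl.
      pose proof (chi_bound 0 1 x). rewrite Rabs_pos_eq; lra.
    - exists 1, 1. split; [lra|]. intros x _. rewrite G0_eq. simpl.
      pose proof (chi_bound 0 1 x). rewrite Rabs_pos_eq; lra.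
    - intros x Hx. rewrite G0_eq. unfold chi.
      destruct (Rlt_dec 0 x); [destruct (Rlt_dec x 1)|]; lra. }
  set (h := / INR (S n)).
  assert (hp : 0 < h) by (apply Rinv_0_lt_compat, INR_Sn_pos).
  assert (h1 : INR (S n) * h = 1) by (unfold h; field; apply Rgt_not_eq, INR_Sn_pos).
  assert (GE : forall x, G_fun n x = Dr h (S n) (Pp n) x).
  { intro x. unfold G_fun. apply iter_E. lia. }
  destruct n as [|n]; [lia|]. clear Hn.
  split; [|split; [|split]].
  - intros _. 
    assert (DN : forall k, (k <= n)%nat -> forall x,
               Derive_n (G_fun (S n)) k x = Dr h (S (S n)) (Pp (S n - k)) x).
    { induction k; intros Hk x.
      - simpl Derive_n. rewrite GE. reflexivity.
      - simpl Derive_n. rewrite (Derive_ext _ (Dr h (S (S n)) (Pp (S n - k)))).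
        2:{ intro t. apply IHk. lia. }
        apply is_derive_unique.
        replace (S n - k)%nat with (S (S (n - S k))) by lia.
        replace (S n - S k)%nat with (S (n - S k)) by lia.
        apply Dr_derive. intro; apply Pp_deriv. }
    replace (S n - 1)%nat with n by lia.
    split.
    + intros k x Hk _. apply (ex_derive_ext (Dr h (S (S n)) (Pp (S n - k)))).
      { intro t. symmetry. apply DN. lia. }
      replace (S n - k)%nat with (S (S (n - S k))) by lia.
      eexists. apply Dr_derive. intro; apply Pp_deriv.
    + intros x _. apply (filterlim_filter_le_1 (F := locally x)).
      apply filter_le_within.
      apply (continuous_ext (Dr h (S (S n)) (Pp (S n - n)))).
      { intro t. symmetry. apply DN. lia. }
      apply Dr_cont. apply Pp_cont.
  - exists 1, h. split; [exact hp|]. intros x Hx. rewrite GE.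
    rewrite Dr_small; [| exact hp | intros; apply Pp_nonpos; lra | lra].
    rewrite Pp_pos by lra. rewrite !Rabs_pos_eq.
    + rewrite Rmult_1_l. apply div_le. apply pow_le; lra. apply fact_ge1.
    + lra.
    + apply Rmult_le_pos. apply pow_le; lra. left. apply Rinv_0_lt_compat, INR_fact_pos.
  - exists 1, h. split; [exact hp|]. intros x Hx. rewrite GE.
    rewrite (Dr_ext _ _ _ (fun y => / INR (fact (S n)) * y ^ (S n) + (- (-1) ^ (S n)) * Pp (S n) (- y))).
    2:{ intro y. apply Pp_refl. }
    rewrite (Dr_comb h (S (S n)) (fun y => y ^ S n) (fun y => Pp (S n) (- y))).
    rewrite Dr_poly by lia.
    rewrite Dr_large; [| exact hp | intros; apply Pp_nonpos; lra | lra].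
    rewrite h1. rewrite Pp_pos by lra.
    replace (- (x - 1)) with (1 - x) by ring.
    replace (/ INR (fact (S n)) * 0 + - (-1) ^ S n * ((-1) ^ S (S n) * ((1 - x) ^ S n / INR (fact (S n)))))
      with (((-1) ^ S n * (-1) ^ S n) * ((1 - x) ^ S n / INR (fact (S n)))) by (simpl; ring).
    rewrite m1sq, Rmult_1_l.
    rewrite Rabs_left1 with (x - 1) by lra. replace (- (x - 1)) with (1 - x) by ring.
    rewrite Rabs_pos_eq.
    + rewrite Rmult_1_l. apply div_le. apply pow_le; lra. apply fact_ge1.
    + apply Rmult_le_pos. apply pow_le; lra. left. apply Rinv_0_lt_compat, INR_fact_pos.
  - intros x Hx. rewrite GE. apply (pos_chain h hp n x). rewrite h1. exact Hx.
Qed.
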